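(* Let $k$ be a positive integer and let $G$ be a multigraph with $|E(G)|\ge 42k\log k$ and minimum degree $\delta(G)\ge 3$. Then $G$ contains $k$ edge-disjoint cycles.
   Context: Logarithms are to base $2$. Multigraphs may have parallel edges (two parallel edges form a cycle of length $2$). *)

(* Defs.v *)
From mathcomp Require Import all_boot.
From Stdlib Require Import Reals.
Set Implicit Arguments. Unset Strict Implicit. Unset Printing Implicit Defensive.

(* A finite multigraph: vertex type V, edge type E, each edge e has
   endpoints src e and dst e (parallel edges allowed since E is arbitrary). *)
Section MG.
Variables (V E : finType) (src dst : E -> V).

Definition incident (v : V) (e : E) : bool := (src e == v) || (dst e == v).

(* degree of v (graph is loopless, so each incident edge counts once) *)
Definition deg (v : V) : nat := #|[set e | incident v e]|.

Definition joins (e : E) (x y : V) : bool :=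
  ((src e == x) && (dst e == y)) || ((src e == y) && (dst e == x)).

Definition is_cycle (C : {set E}) : Prop :=
  exists (l : nat) (vs : 'I_l -> V) (es : 'I_l -> E),
    [/\ 2 <= l, injective vs, injective es,
        (forall i : 'I_l, joins (es i) (vs i) (vs (ordS i)))
      & C = [set es i | i : 'I_l]].
End MG.

Definition log2 (x : R) : R := (ln x / ln 2)%R.

(* Main.v *)
Require Import Defs.
From mathcomp Require Import all_boot zify.
From Stdlib Require Import Classical_Prop.
Set Implicit Arguments. Unset Strict Implicit. Unset Printing Implicit Defensive.

Section G.
Variables (V E : finType) (src dst : E -> V).
Hypothesis loopless : forall e, src e != dst e.

Ltac plia := repeat match goal with H : _ |- _ => clear H end; lia.

Local Notation incident := (incident src dst).
Local Notation joins := (joins src dst).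

Definition degF (F : {set E}) v := #|[set e in F | incident v e]|.

Lemma incident_card e : #|[set v | incident v e]| = 2.
Proof.
have -> : [set v | incident v e] = [set src e; dst e].
  by apply/setP => v; rewrite !inE /Defs.incident; rewrite ![_ == v]eq_sym.
by rewrite cards2 loopless.
Qed.

Lemma degF_sum F v : degF F v = \sum_(e in F) incident v e.
Proof.
rewrite /degF -sum1_card.
rewrite (eq_bigl (fun e => (e \in F) && incident v e)); last by move=> e; rewrite inE.
by rewrite big_mkcondr /=; apply: eq_bigr => e _; case: (incident v e).
Qed.

Lemma handshake F : \sum_v degF F v = 2 * #|F|.
Proof.
under eq_bigr do rewrite degF_sum.
rewrite exchange_big /=.
rewrite (eq_bigr (fun _ => 2)); last first.
  move=> e _; rewrite -(incident_card e) -sum1_card.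
  rewrite [RHS](eq_bigl (fun v => incident v e)); last by move=> v; rewrite inE.
  by rewrite [RHS]big_mkcond /=; apply: eq_bigr => v _; case: (incident v e).
by rewrite sum_nat_const mulnC.
Qed.


Fixpoint pth (F : {set E}) (x : V) (s : seq (E * V)) : bool :=
  if s is (e, y) :: s' then [&& e \in F, joins e x y & pth F y s'] else true.
Definition verts x (s : seq (E * V)) := x :: map snd s.
Definition eset (s : seq (E * V)) := [set e in map fst s].
Definition start x (s : seq (E * V)) := last x (map snd s).

Lemma joins_inc e x y v : joins e x y -> incident v e = (v == x) || (v == y).
Proof.
rewrite /Defs.joins /Defs.incident.
by case/orP=> /andP[/eqP-> /eqP->]; rewrite ![_ == v]eq_sym // orbC.
Qed.

Lemma joins_neq e x y : joins e x y -> x != y.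
Proof.
rewrite /Defs.joins => /orP[/andP[/eqP<- /eqP<-]|/andP[/eqP<- /eqP<-]];
  [exact: loopless | rewrite eq_sym; exact: loopless].
Qed.

Lemma degF0 v : degF set0 v = 0.
Proof. by apply/eqP; rewrite cards_eq0; apply/eqP/setP=> e; rewrite !inE. Qed.

Lemma degFU1 (e : E) (F : {set E}) (v : V) : e \notin F -> degF (e |: F) v = degF F v + incident v e.
Proof.
move=> eF; rewrite /degF.
case ie: (incident v e).
  have -> : [set e' in e |: F | incident v e'] = e |: [set e' in F | incident v e'].
    by apply/setP=> e'; rewrite !inE; case: eqP => [->|]; rewrite ?ie.
  by rewrite cardsU1 inE (negbTE eF) addnC.
have -> : [set e' in e |: F | incident v e'] = [set e' in F | incident v e'].
  by apply/setP=> e'; rewrite !inE; case: eqP => [->|]; rewrite ?ie ?(negbTE eF).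
by rewrite addn0.
Qed.

Lemma pth_cat F x t s :
  pth F x (t ++ s) = pth F x t && pth F (start x t) s.
Proof.
elim: t x => [|[e y] t IH] x //=.
by rewrite IH !andbA.
Qed.

Lemma pth_edge F x s e : pth F x s -> e \in map fst s -> e \in F.
Proof.
elim: s x => [|[e' y] s IH] x //=.
case/and3P=> e'F _ ps; rewrite in_cons => /orP[/eqP->//|]; exact: IH ps.
Qed.

Lemma pth_inc F x s e v : pth F x s -> e \in map fst s -> incident v e ->
  v \in verts x s.
Proof.
elim: s x => [|[e' y] s IH] x //=.
case/and3P=> _ je ps; rewrite in_cons => /orP[/eqP->|es] ie.
  by move: ie; rewrite (joins_inc _ je) !in_cons => /orP[->|->]; rewrite ?orbT.
by rewrite in_cons (IH _ ps es ie) orbT.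
Qed.

Lemma pth_uniq_edges F x s : pth F x s -> uniq (verts x s) -> uniq (map fst s).
Proof.
elim: s x => [|[e y] s IH] x //= /and3P[_ je ps] /andP[xn us].
rewrite (IH _ ps us) andbT; apply/negP => es.
have := pth_inc ps es (v := x); rewrite (joins_inc _ je) eqxx => /(_ isT).
by rewrite (negbTE xn).
Qed.

Lemma eset_cons e y s : eset ((e, y) :: s) = e |: eset s.
Proof. by apply/setP=> e'; rewrite !inE. Qed.

Lemma pth_deg F x s v : pth F x s -> uniq (verts x s) ->
  degF (eset s) v + (v == x) + (v == start x s) = 2 * (v \in verts x s).
Proof.
elim: s x => [|[e y] s IH] x /=.
  move=> _ _; rewrite /eset /= /start /=.
  have -> : [set e0 in [::] : seq E] = set0 by apply/setP=> e0; rewrite !inE.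
  by rewrite degF0 inE; case: (v == x).
case/and3P=> eF je ps /andP[xn us].
have en : e \notin eset s.
  rewrite inE; apply/negP => es.
  have := pth_inc ps es (v := x); rewrite (joins_inc _ je) eqxx => /(_ isT).
  by rewrite (negbTE xn).
rewrite eset_cons degFU1 // (joins_inc _ je).
have := IH _ ps us; rewrite /start /= => IH'.
rewrite !in_cons.
case: (eqVneq v x) IH' => [->|vx] IH'.
  have xy : (x == y) = false by apply/negbTE; move: xn; rewrite in_cons negb_or => /andP[].
  have xs : (x \in map snd s) = false by apply/negbTE; move: xn; rewrite in_cons negb_or => /andP[].
  have xl : (x == last y (map snd s)) = false.
    by apply/negbTE/eqP=> h; move: xn; rewrite h mem_last.
  move: IH'; rewrite /verts in_cons xy xs xl /=; move: (degF (eset s) x) => d; plia.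
move: IH'; rewrite /verts in_cons /=.
move: (degF (eset s) v) => d.
case: (v == y); case: (v == last y [seq i.2 | i <- s]); case: (v \in _); simpl; plia.
Qed.


Lemma joins_sym e x y : joins e x y = joins e y x.
Proof. by rewrite /Defs.joins; apply: orbC. Qed.

Lemma pth_nth F x s d w i : pth F x s -> i < size s ->
  joins (nth d (map fst s) i) (nth w (verts x s) i) (nth w (verts x s) i.+1).
Proof.
elim: s x i => [|[e y] s IH] x i //= /and3P[_ je ps].
case: i => [|i] //= ltis.
exact: (IH y i ps ltis).
Qed.

Lemma img_nth (T : finType) (L : seq T) d n (H : size L = n) :
  [set nth d L (val i) | i : 'I_n] = [set y in L].
Proof.
apply/setP=> y; rewrite inE; apply/imsetP/idP => [[i _ ->]|yL].
  by apply: mem_nth; rewrite H ltn_ord.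
have hi : index y L < n by rewrite -H index_mem.
by exists (Ordinal hi) => //=; rewrite nth_index.
Qed.

Lemma close F x s e z : pth F x s -> uniq (verts x s) -> e \in F ->
  joins e x z -> z \in map snd s ->
  (if s is (e0, _) :: _ then e != e0 else true) ->
  exists (C : {set E}) (P : pred V),
    [/\ C \subset F, is_cycle src dst C, (forall v, degF C v = 2 * P v),
        (forall v, P v -> v \in verts x s) & P x].
Proof.
case: s => [|[e0 y] s'] // ps us eF je zs nb.
set s := (e0, y) :: s' in ps us zs.
set i := index z (map snd s).
have zi : i < size s by rewrite -(size_map snd) index_mem.
set t := take i.+1 s.
have st : s = t ++ drop i.+1 s by rewrite cat_take_drop.
have pt : pth F x t by move: ps; rewrite st pth_cat => /andP[].
have vt : verts x t = take i.+2 (verts x s) by rewrite /verts /t map_take.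
have ut : uniq (verts x t) by rewrite vt take_uniq.
have szt : size t = i.+1 by rewrite /t size_takel.
have stz : start x t = z.
  rewrite /start /t map_take -nth_last size_takel ?size_map //.
  by rewrite -pred_Sn nth_take // nth_index.
have xz := joins_neq je.
have dx := pth_deg x pt ut; rewrite stz eqxx (negbTE xz) mem_head in dx.
have e0t : e0 \in eset t by rewrite inE /t /= mem_head.
have ie0 : incident x e0 by move: ps => /= /and3P[_ j _]; rewrite (joins_inc _ j) eqxx.
have iex : incident x e by rewrite (joins_inc _ je) eqxx.
have enot : e \notin eset t.
  apply/negP => et.
  have : [set e; e0] \subset [set e' in eset t | incident x e'].
    apply/subsetP=> e'; rewrite in_set2 => /orP[] /eqP->; rewrite in_set;
    by apply/andP; split.
  move/subset_leq_card; rewrite cards2 nb => h2.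
  have : 2 <= degF (eset t) x by exact: h2.
  by move: dx => /= /eqP; rewrite addn0 addn1 eqSS => /eqP ->.
exists (e |: eset t), (fun v => v \in verts x t); split.
- rewrite subUset sub1set eF /=; apply/subsetP=> e'; rewrite inE.
  exact: pth_edge pt.
- pose L := rcons (map fst t) e.
  pose W := verts x t.
  have sL : size L = (size t).+1 by rewrite size_rcons size_map.
  have sW : size W = (size t).+1 by rewrite /W /verts /= size_map.
  exists (size t).+1, (fun i => nth x W i), (fun i => nth e L i); split.
  + by rewrite szt.
  + move=> a b /eqP; rewrite nth_uniq ?sW // => /eqP; exact: val_inj.
  + move=> a b /eqP; rewrite nth_uniq ?sL //; first by move/eqP; exact: val_inj.
    rewrite /L rcons_uniq; apply/andP; split.
      by move: enot; rewrite inE.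
    exact: pth_uniq_edges pt ut.
  + move=> a; rewrite /ordS /=.
    have la := ltn_ord a.
    case: (ltnP a (size t)) => ha.
      rewrite modn_small // /L nth_rcons size_map ha.
      by apply: (pth_nth e x pt ha).
    have aeq : nat_of_ord a = size t by apply/eqP; rewrite eqn_leq ha -ltnS la.
    rewrite aeq modnn /L nth_rcons size_map ltnn eqxx.
    have -> : nth x W (size t) = z.
      by have := nth_last x (x :: map snd t); rewrite /= size_map => ->.
    by rewrite joins_sym.
  + rewrite (img_nth _ sL); apply/setP=> e'; rewrite !inE /L mem_rcons in_cons.
    by rewrite orbCA.
- move=> v; rewrite degFU1 // (joins_inc _ je).
  have := pth_deg v pt ut; rewrite stz.
  have : ~~ ((v == x) && (v == z)).
    by apply/negP=> /andP[/eqP-> /eqP h]; rewrite h eqxx in xz.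
  move: (degF (eset t) v) => d.
  by case: (v == x); case: (v == z); case: (v \in verts x t) => //= _; rewrite ?addn0 ?addn1 => ->.
- by move=> v; rewrite vt => /mem_take.
- exact: mem_head.
Qed.


Definition nb (s : seq (E * V)) e := if s is (e0, _) :: _ then e != e0 else true.
Definition other e x := if src e == x then dst e else src e.

Lemma other_joins e x : incident x e -> joins e x (other e x).
Proof.
rewrite /other /Defs.incident /Defs.joins.
by case: eqP => [->|_] /= h; rewrite ?eqxx ?h //= orbT.
Qed.

Lemma deg_pos (F : {set E}) x e : e \in F -> incident x e -> 0 < degF F x.
Proof. by move=> eF ie; apply/card_gt0P; exists e; rewrite inE eF. Qed.

Lemma pick_edge (F : {set E}) x e0 : 2 <= degF F x -> exists e, [/\ e \in F, incident x e & e != e0].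
Proof.
rewrite /degF (cardsD1 e0) => h.
have : 0 < #|[set e in F | incident x e] :\ e0|.
  by move: h; case: (e0 \in _) => /=; plia.
by case/card_gt0P=> e; rewrite !inE => /and3P[? ? ?]; exists e.
Qed.

Lemma pick_edge2 (F : {set E}) x e0 : 3 <= degF F x ->
  exists e1 e2, [/\ e1 \in F, incident x e1, e1 != e0, e2 \in F & [/\ incident x e2, e2 != e0 & e2 != e1]].
Proof.
rewrite /degF (cardsD1 e0) => h.
have h1 : 1 < #|[set e in F | incident x e] :\ e0|.
  by move: h; case: (e0 \in _) => /=; plia.
have : 0 < #|[set e in F | incident x e] :\ e0| by move: h1; plia.
case/card_gt0P=> e1 He1.
move: h1; rewrite (cardsD1 e1) He1 /= => h1.
have : 0 < #|[set e in F | incident x e] :\ e0 :\ e1| by move: h1; plia.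
case/card_gt0P=> e2; rewrite !inE => /and4P[? ? ? ?].
move: He1; rewrite !inE => /and3P[? ? ?].
by exists e1, e2; split.
Qed.

Lemma deg1_unique (A : {set E}) x e e' : degF A x = 1 -> e \in A -> incident x e ->
  e' \in A -> incident x e' -> e' = e.
Proof.
move=> d1 eA ie e'A ie'; apply/eqP; apply: contraT => ne.
have : [set e; e'] \subset [set e0 in A | incident x e0].
  apply/subsetP=> e0; rewrite in_set2 => /orP[] /eqP->; rewrite in_set;
  by apply/andP; split.
move/subset_leq_card; rewrite cards2 eq_sym ne /degF -/(degF A x) d1.
by [].
Qed.

Lemma uniq_size_card (s : seq V) : uniq s -> size s <= #|V|.
Proof. by move=> us; rewrite -(card_uniqP us); apply: max_card. Qed.

Lemma ext_step W x s : (forall v, degF W v != 1) ->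
  pth W x s -> uniq (verts x s) -> s != [::] ->
  (exists (C : {set E}) (P : pred V),
    [/\ C \subset W, is_cycle src dst C & (forall v, degF C v = 2 * P v)]) \/
  (exists e z, pth W z ((e, x) :: s) /\ uniq (verts z ((e, x) :: s))).
Proof.
move=> nd ps us sn.
case: s ps us sn => [|[e0 y] s'] // ps us _.
have ps0 := ps; move: ps0 => /= /and3P[e0W je0 ps'].
have d2 : 2 <= degF W x.
  have := deg_pos e0W (x := x); rewrite (joins_inc _ je0) eqxx => /(_ isT).
  by have := nd x; case: (degF W x) => [|[|]].
case: (pick_edge e0 d2) => e [eW ie ne].
have jz := other_joins ie.
case zs: (other e x \in map snd ((e0, y) :: s')).
  left; case: (close ps us eW jz zs ne) => C [P [sub cyc deg _ _]].
  by exists C, P; split.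
right; exists e, (other e x); split.
  by rewrite /= eW joins_sym jz.
move: us; rewrite /verts /= => ->; rewrite andbT.
rewrite in_cons negb_or eq_sym (joins_neq jz) /=.
by move: zs; rewrite /= => ->.
Qed.

Lemma ext_aux W n : (forall v, degF W v != 1) -> forall x s,
  pth W x s -> uniq (verts x s) -> s != [::] -> #|V| - size (verts x s) <= n ->
  exists (C : {set E}) (P : pred V),
    [/\ C \subset W, is_cycle src dst C & (forall v, degF C v = 2 * P v)].
Proof.
move=> nd; elim: n => [|n IH] x s ps us sn hn;
  case: (ext_step nd ps us sn) => // [[e [z [pz uz]]]].
  by have := uniq_size_card uz; move: hn; rewrite /verts /=; plia.
apply: (IH z ((e, x) :: s)) => //.
by move: hn; rewrite /verts /=; plia.
Qed.

Lemma extract W : W != set0 -> (forall v, degF W v != 1) ->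
  exists (C : {set E}) (P : pred V),
    [/\ C \subset W, is_cycle src dst C & (forall v, degF C v = 2 * P v)].
Proof.
case/set0Pn=> e eW nd.
apply: (ext_aux (n := #|V|) nd (x := dst e) (s := [:: (e, src e)])) => //.
- by rewrite /= eW /Defs.joins !eqxx orbT.
- by rewrite /verts /= inE eq_sym loopless.
- by rewrite leq_subr.
Qed.


Definition Bs (F : {set E}) := [set v | 2 < degF F v].
Definition VF (F : {set E}) := [set v | 0 < degF F v].
Definition evenS (W : {set E}) := forall v, ~~ odd (degF W v).
Definition pruned (F : {set E}) := forall v, degF F v != 1.
Definition wt (F : {set E}) x s := #|[set v in Bs F | v \in verts x s]|.
Definition NoShort (F : {set E}) Q := forall W : {set E}, W \subset F -> W != set0 -> evenS W ->
  Q < #|Bs F :&: VF W|.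

Lemma wt_cons F z e x s : z \notin verts x s ->
  wt F z ((e, x) :: s) = (z \in Bs F) + wt F x s.
Proof.
move=> zn; rewrite /wt.
have zB' : (2 < degF F z) = (z \in Bs F) by rewrite inE.
case zB: (z \in Bs F).
  have -> : [set v in Bs F | v \in verts z ((e, x) :: s)] =
            z |: [set v in Bs F | v \in verts x s].
    apply/setP=> v; rewrite !inE /verts /= ?inE.
    by case: eqP => [->|_] /=; rewrite ?andbT ?zB' ?zB.
  by rewrite cardsU1 inE (negbTE zn) andbF.
have -> : [set v in Bs F | v \in verts z ((e, x) :: s)] =
          [set v in Bs F | v \in verts x s].
  apply/setP=> v; rewrite !inE /verts /= ?inE.
  by case: eqP => [->|_] /=; rewrite ?andbT ?zB' ?zB.
by [].
Qed.

Lemma degF_set0 (C : {set E}) v : 0 < degF C v -> C != set0.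
Proof. by case/card_gt0P=> e; rewrite inE => /andP[eC _]; apply/set0Pn; exists e. Qed.

Lemma even2 (C : {set E}) (P : pred V) : (forall v, degF C v = 2 * P v) -> evenS C.
Proof. by move=> h v; rewrite h mul2n odd_double. Qed.

Lemma close_short F Q x s e z : NoShort F Q -> pth F x s -> uniq (verts x s) ->
  e \in F -> joins e x z -> z \in map snd s -> nb s e -> Q < wt F x s.
Proof.
move=> NS ps us eF je zs nbe.
case: (close ps us eF je zs nbe) => C [P [sub cyc deg inv Px]].
have Cn : C != set0 by apply: (@degF_set0 C x); rewrite deg Px.
have := NS C sub Cn (even2 deg).
move/leq_trans; apply; apply: subset_leq_card; apply/subsetP=> v.
rewrite !inE => /andP[vB]; rewrite deg => hP; rewrite vB /=.
by apply: inv; move: hP; case: (P v).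
Qed.

Lemma thread_step F Q x s e : pruned F -> NoShort F Q ->
  pth F x s -> uniq (verts x s) -> e \in F -> incident x e -> nb s e ->
  wt F x s <= Q ->
  (exists u, [/\ pth F u ((e, x) :: s), uniq (verts u ((e, x) :: s)),
      u \in Bs F & wt F u ((e, x) :: s) = (wt F x s).+1]) \/
  (exists z e', [/\ pth F z ((e, x) :: s), uniq (verts z ((e, x) :: s)),
      e' \in F, incident z e' & [/\ nb ((e, x) :: s) e' &
      wt F z ((e, x) :: s) = wt F x s]]).
Proof.
move=> pF NS ps us eF ie nbe hw.
have jz := other_joins ie; set z := other e x in jz.
case zs: (z \in map snd s).
  by have := close_short NS ps us eF jz zs nbe; move: hw; plia.
have zn : z \notin verts x s.
  by rewrite /verts in_cons negb_or zs andbT eq_sym (joins_neq jz).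
have pz : pth F z ((e, x) :: s) by rewrite /= eF joins_sym jz.
have uz : uniq (verts z ((e, x) :: s)) by rewrite /verts /= zn.
case zB: (z \in Bs F).
  left; exists z; split => //.
  by rewrite wt_cons // zB.
right.
have d2 : 2 <= degF F z.
  have := deg_pos eF (x := z); rewrite (joins_inc _ jz) eqxx orbT => /(_ isT).
  by have := pF z; case: (degF F z) => [|[|]].
case: (pick_edge e d2) => e' [e'F ie' ne'].
exists z, e'; split => //.
by rewrite wt_cons // zB.
Qed.

Lemma thread F Q n : pruned F -> NoShort F Q -> forall x s e,
  pth F x s -> uniq (verts x s) -> e \in F -> incident x e -> nb s e ->
  wt F x s <= Q -> #|V| - size (verts x s) <= n ->
  exists t u, [/\ pth F u (t ++ (e, x) :: s), uniq (verts u (t ++ (e, x) :: s)),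
      u \in Bs F & wt F u (t ++ (e, x) :: s) = (wt F x s).+1].
Proof.
move=> pF NS; elim: n => [|n IH] x s e ps us eF ie nbe hw hn;
  case: (thread_step pF NS ps us eF ie nbe hw) =>
    [[u [pu uu uB wu]]|[z [e' [pz uz e'F ie' [nbe' wz]]]]].
- by exists [::], u.
- by have := uniq_size_card uz; move: hn; rewrite /verts /=; plia.
- by exists [::], u.
have := IH z ((e, x) :: s) e' pz uz e'F ie' nbe'; rewrite wz => /(_ hw).
case.
  by move: hn; rewrite /verts /=; plia.
move=> t [u [pu uu uB wu]].
exists (rcons t (e', z)), u.
by rewrite cat_rcons; split.
Qed.


Lemma degF_all (X : {set E}) v : degF X v = \sum_e ((e \in X) && incident v e).
Proof.
rewrite /degF -sum1_card big_mkcond /=; apply: eq_bigr => e _.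
by rewrite inE; case: (_ && _).
Qed.

Lemma degF_symdiff (A D : {set E}) v :
  degF ((A :\: D) :|: (D :\: A)) v + 2 * degF (A :&: D) v = degF A v + degF D v.
Proof.
rewrite !degF_all big_distrr -!big_split /=; apply: eq_bigr => e _.
by rewrite !inE; case: (e \in A); case: (e \in D); case: (incident v e).
Qed.

Lemma pth_last F u T e x : pth F u (T ++ [:: (e, x)]) -> incident x e.
Proof.
rewrite pth_cat => /andP[_] /= /and3P[_ j _].
by rewrite (joins_inc _ j) eqxx orbT.
Qed.

Lemma verts_cat_uniq u t s : uniq (verts u (t ++ s)) -> uniq (verts u t).
Proof. by rewrite /verts map_cat -cat_cons cat_uniq => /andP[]. Qed.

Lemma verts_cat_sub u t s : {subset verts u t <= verts u (t ++ s)}.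
Proof. by move=> v; rewrite /verts map_cat -cat_cons mem_cat => ->. Qed.

Lemma two_paths F Q u x T1 T2 e1 e2 s : NoShort F Q -> e1 != e2 ->
  pth F u (T1 ++ (e1, x) :: s) -> uniq (verts u (T1 ++ (e1, x) :: s)) ->
  pth F u (T2 ++ (e2, x) :: s) -> uniq (verts u (T2 ++ (e2, x) :: s)) ->
  Q < wt F u (T1 ++ (e1, x) :: s) + wt F u (T2 ++ (e2, x) :: s).
Proof.
move=> NS ne.
have key : forall T e, pth F u (T ++ (e, x) :: s) -> uniq (verts u (T ++ (e, x) :: s)) ->
  [/\ pth F u (T ++ [:: (e, x)]), uniq (verts u (T ++ [:: (e, x)])),
      start u (T ++ [:: (e, x)]) = x, u != x &
      {subset verts u (T ++ [:: (e, x)]) <= verts u (T ++ (e, x) :: s)}].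
  move=> T e; rewrite -cat_rcons -cats1 pth_cat => /andP[p1 _] uu.
  have u1 : uniq (verts u (T ++ [:: (e, x)])) by apply: verts_cat_uniq uu.
  have st : start u (T ++ [:: (e, x)]) = x by rewrite /start map_cat last_cat.
  split => //.
  - apply/eqP=> ux; move: u1; rewrite /verts /= => /andP[+ _].
    by rewrite map_cat mem_cat /= inE ux eqxx orbT.
  - by rewrite -cat_rcons -cats1; apply: verts_cat_sub.
move=> p1 u1 p2 u2.
case: (key _ _ p1 u1) => q1 v1 s1 ux sub1.
case: (key _ _ p2 u2) => q2 v2 s2 _ sub2.
set A := eset (T1 ++ [:: (e1, x)]).
set D := eset (T2 ++ [:: (e2, x)]).
have dA := pth_deg _ q1 v1; rewrite s1 -/A in dA.
have dD := pth_deg _ q2 v2; rewrite s2 -/D in dD.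
set W := (A :\: D) :|: (D :\: A).
have dW := degF_symdiff A D.
have AF : A \subset F by apply/subsetP=> e; rewrite inE; apply: pth_edge q1.
have DF : D \subset F by apply/subsetP=> e; rewrite inE; apply: pth_edge q2.
have WF : W \subset F.
  by rewrite subUset; apply/andP; split; apply: subset_trans (subsetDl _ _) _.
have eW : evenS W.
  move=> v; have := dW v; have := dA v; have := dD v.
  move: (degF W v) (degF A v) (degF D v) (degF (A :&: D) v) => a b c d.
  move=> hD hA hW.
  have e : a + 2 * (d + (v == u) + (v == x)) =
           2 * ((v \in verts u (T1 ++ [:: (e1, x)])) + (v \in verts u (T2 ++ [:: (e2, x)]))).
    by move: hD hA hW; plia.
  by move/(congr1 odd): e; rewrite oddD !mul2n !odd_double addbF => ->.
have e1A : e1 \in A by rewrite inE map_cat mem_cat /= in_cons eqxx orbT.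
have ie1 : incident x e1 by apply: pth_last q1.
have ie2 : incident x e2 by apply: pth_last q2.
have e2D : e2 \in D by rewrite inE map_cat mem_cat /= in_cons eqxx orbT.
have dDx : degF D x = 1.
  have := dD x; rewrite eqxx eq_sym (negbTE ux).
  have -> : x \in verts u (T2 ++ [:: (e2, x)]).
    by rewrite /verts /= map_cat in_cons mem_cat /= in_cons eqxx !orbT.
  by move=> /=; plia.
have e1D : e1 \notin D.
  apply/negP => h; have := deg1_unique dDx e2D ie2 h ie1.
  by move/eqP; rewrite (negbTE ne).
have Wn : W != set0 by apply/set0Pn; exists e1; rewrite /W in_setU in_setD e1A e1D.
have := NS W WF Wn eW.
move/leq_trans; apply.
apply: leq_trans (_ : #|[set v in Bs F | v \in verts u (T1 ++ (e1, x) :: s)] :|: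
                       [set v in Bs F | v \in verts u (T2 ++ (e2, x) :: s)]| <= _).
  apply: subset_leq_card; apply/subsetP=> v.
  rewrite in_setI => /andP[vB hv]; rewrite /VF in_set in hv.
  rewrite in_setU !in_set; move: vB; rewrite in_set => -> /=.
  have := dW v; move: hv.
  case hA : (0 < degF A v).
    have : v \in verts u (T1 ++ [:: (e1, x)]).
      by apply: contraLR hA => hn; have := dA v; rewrite (negbTE hn) /=; plia.
    by move/sub1 => ->.
  case hD : (0 < degF D v).
    have : v \in verts u (T2 ++ [:: (e2, x)]).
      by apply: contraLR hD => hn; have := dD v; rewrite (negbTE hn) /=; plia.
    by move/sub2 => ->; rewrite orbT.
  move/negbT: hA; move/negbT: hD; rewrite -!leqNgt /W => h1 h2 h3 h4; exfalso; move: h1 h2 h3 h4; plia.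
by rewrite cardsU leq_subr.
Qed.


Lemma grow F Q r d : pruned F -> NoShort F Q -> 2 * r <= Q -> forall x s,
  pth F x s -> uniq (verts x s) -> x \in Bs F -> wt F x s + d <= r ->
  exists S : {set V}, [/\ S \subset Bs F, 2 ^ d <= #|S| &
    forall u, u \in S -> exists t,
      [/\ pth F u (t ++ s), uniq (verts u (t ++ s)) & wt F u (t ++ s) <= r]].
Proof.
move=> pF NS hQ; elim: d => [|d IH] x s ps us xB hw.
  exists [set x]; split; first by rewrite sub1set.
    by rewrite cards1.
  by move=> u; rewrite inE => /eqP->; exists [::]; split => //=; move: hw; rewrite addn0.
have d3 : 3 <= degF F x by move: xB; rewrite inE.
have [ee _] : exists ee : E, true.
  have : 0 < degF F x by move: d3; plia.
  by case/card_gt0P=> ee _; exists ee.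
pose e0 := if s is (e', _) :: _ then e' else ee.
case: (pick_edge2 e0 d3) => e1 [e2 [e1F ie1 n1 e2F [ie2 n2 n12]]].
have nbP : forall e, e != e0 -> nb s e by rewrite /e0 /nb; case: (s) => [|[]].
have nb1 := nbP _ n1.
have nb2 := nbP _ n2.
have hwQ : wt F x s <= Q by move: hw hQ; plia.
have hn : #|V| - size (verts x s) <= #|V| by rewrite leq_subr.
case: (thread pF NS ps us e1F ie1 nb1 hwQ hn) => t1 [u1 [p1 uu1 u1B w1]].
case: (thread pF NS ps us e2F ie2 nb2 hwQ hn) => t2 [u2 [p2 uu2 u2B w2]].
case: (IH _ _ p1 uu1 u1B) => [|S1 [S1B c1 h1]]; first by rewrite w1; move: hw; plia.
case: (IH _ _ p2 uu2 u2B) => [|S2 [S2B c2 h2]]; first by rewrite w2; move: hw; plia.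
have dis : S1 :&: S2 = set0.
  apply/setP=> v; rewrite !inE; apply/negP=> /andP[v1 v2].
  case: (h1 v v1) => ta [pa ua wa].
  case: (h2 v v2) => tb [pb ub wb].
  rewrite catA in pa ua wa; rewrite catA in pb ub wb.
  have n12' : e1 != e2 by rewrite eq_sym.
  have := two_paths NS n12' pa ua pb ub; move: wa wb hQ; move=> k1 k2 k3; rewrite ltnNge => /negP; apply; apply: leq_trans (leq_add k1 k2) _; by rewrite addnn -mul2n.
exists (S1 :|: S2); split.
- by rewrite subUset S1B S2B.
- by rewrite cardsU dis cards0 subn0 expnS; move: c1 c2; plia.
move=> u; rewrite inE => /orP[] uS.
  case: (h1 u uS) => t [pt ut wt'].
  by exists (t ++ t1 ++ [:: (e1, x)]); rewrite -!catA /=; split.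
case: (h2 u uS) => t [pt ut wt'].
by exists (t ++ t2 ++ [:: (e2, x)]); rewrite -!catA /=; split.
Qed.


Lemma moore F r : pruned F -> F != set0 -> 0 < r -> #|Bs F| < 2 ^ r.-1 ->
  exists W : {set E}, [/\ W \subset F, W != set0, evenS W & #|Bs F :&: VF W| <= 2 * r].
Proof.
move=> pF Fn r0 hB.
case: (classic (exists W : {set E}, [/\ W \subset F, W != set0, evenS W &
   #|Bs F :&: VF W| <= 2 * r])) => // nW; exfalso.
have NS : NoShort F (2 * r).
  move=> W WF Wn eW; rewrite ltnNge; apply/negP => h; apply: nW.
  by exists W; split.
case: (set_0Vmem (Bs F)) => [B0|[v vB]].
  have eF : evenS F.
    move=> v; have := pF v; have : v \notin Bs F by rewrite B0 inE.
    rewrite inE; case: (degF F v) => [|[|[|]]] //.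
  have := NS F (subxx _) Fn eF; rewrite B0 set0I cards0; plia.
have := grow pF NS (leqnn _) (x := v) (s := [::]) (d := r.-1) isT.
case.
- by rewrite /verts.
- exact: vB.
- have -> : wt F v [::] = 1.
    rewrite /wt (_ : [set w in Bs F | w \in verts v [::]] = [set v]) ?cards1 //.
    apply/setP=> w; rewrite !inE /verts /= ?inE.
    by case: eqP => [->|_]; rewrite ?andbF ?andbT //; move: vB; rewrite inE.
  move: r0; plia.
move=> S [SB cS _].
have := subset_leq_card SB; move: cS hB; plia.
Qed.


Lemma degF_split (F C : {set E}) v : C \subset F ->
  degF F v = degF C v + degF (F :\: C) v.
Proof.
move=> /subsetP CF; rewrite !degF_all -big_split /=; apply: eq_bigr => e _.
rewrite !inE; case eC: (e \in C) => /=; last by rewrite add0n.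
by rewrite (CF _ eC) /= addn0.
Qed.

Lemma degF_sub (A D : {set E}) v : A \subset D -> degF A v <= degF D v.
Proof. by move=> AD; rewrite (degF_split v AD) leq_addr. Qed.

Lemma VF_sub (A D : {set E}) : A \subset D -> VF A \subset VF D.
Proof.
move=> AD; apply/subsetP=> v; rewrite !inE => h.
by apply: leq_trans h (degF_sub v AD).
Qed.

Lemma card_sum (A : {set V}) : #|A| = \sum_v (v \in A).
Proof. by rewrite -sum1_card big_mkcond /=; apply: eq_bigr => v _; case: (v \in A). Qed.

Lemma core (F : {set E}) : exists F' : {set E}, [/\ F' \subset F, pruned F' &
  #|F| + #|VF F'| <= #|F'| + #|VF F|].
Proof.
move: {2}#|F| (leqnn #|F|) => n; elim: n F => [|n IH] F hF.
  exists F; split => //; move=> v; rewrite /degF.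
  have : F = set0 by apply/eqP; rewrite -cards_eq0; move: hF; plia.
  move=> ->; suff -> : [set e in set0 | incident v e] = set0 by rewrite cards0.
  by apply/setP=> e; rewrite !inE.
case: (boolP [exists v, degF F v == 1]) => [/existsP[v /eqP d1]|]; last first.
  move=> nE; exists F; split => //; move=> v; apply/negP=> h.
  by move/negP: nE; apply; apply/existsP; exists v.
have : 0 < degF F v by rewrite d1.
case/card_gt0P=> e; rewrite inE => /andP[eF ie].
set F1 := F :\ e.
have cF1 : #|F1|.+1 = #|F| by rewrite (cardsD1 e F) eF.
have sub1 : VF F1 \subset VF F :\ v.
  apply/subsetP=> w; rewrite !inE => hw; apply/andP; split.
    apply/eqP=> wv; move: hw; rewrite wv; case/card_gt0P=> e'.
    rewrite !inE => /andP[/andP[ne' e'F] ie'].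
    by have := deg1_unique d1 eF ie e'F ie'; move/eqP; rewrite (negbTE ne').
  by apply: leq_trans hw (degF_sub w (subD1set _ _)).
have vV : v \in VF F by rewrite inE d1.
have cV : #|VF F1| < #|VF F|.
  have c1 := subset_leq_card sub1; have c2 := cardsD1 v (VF F).
  by rewrite vV in c2; move: c1 c2; plia.
case: (IH F1) => [|F' [sF' pF' hF']]; first by move: cF1 hF; plia.
exists F'; split => //; first by apply: subset_trans sF' (subD1set _ _).
move: hF' cF1 cV; plia.
Qed.

Lemma trim x (F : {set E}) : pruned F -> x + #|VF F| <= #|F| ->
  exists F' : {set E}, [/\ F' \subset F, pruned F' & x + #|VF F'| = #|F'|].
Proof.
move: {2}#|F| (leqnn #|F|) => n; elim: n F => [|n IH] F hF pF hx.
  by exists F; split => //; move: hF hx; plia.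
case: (ltngtP (x + #|VF F|) #|F|) hx => // [lt _|eq _]; last by exists F; split.
have : 0 < #|F| by move: lt; plia.
case/card_gt0P=> e eF.
set F1 := F :\ e.
have cF1 : #|F1|.+1 = #|F| by rewrite (cardsD1 e F) eF.
have v1 : #|VF F1| <= #|VF F| by apply/subset_leq_card/VF_sub/subD1set.
case: (core F1) => F2 [s2 p2 h2].
have c2 : #|F2| <= #|F1| by apply: subset_leq_card.
case: (IH F2 _ p2) => [||F' [s' p' h']]; try by move: c2 cF1 hF h2 lt v1; plia.
exists F'; split => //.
by apply: subset_trans s' (subset_trans s2 (subD1set _ _)).
Qed.

Lemma bs_bound F : pruned F -> 2 * #|VF F| + #|Bs F| <= 2 * #|F|.
Proof.
move=> pF; rewrite -handshake !card_sum big_distrr -big_split /=.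
apply: leq_sum => v _; rewrite !inE; have := pF v.
by case: (degF F v) => [|[|[|d]]].
Qed.

Lemma VF_card_cycle (C : {set E}) (P : pred V) :
  (forall v, degF C v = 2 * P v) -> #|VF C| = #|C|.
Proof.
move=> h; apply/eqP; rewrite -(eqn_pmul2l (isT : 0 < 2)) -handshake card_sum.
rewrite big_distrr /=; apply/eqP; apply: eq_bigr => v _.
by rewrite inE h; case: (P v).
Qed.

Lemma step (F : {set E}) x R : pruned F -> x + #|VF F| = #|F| -> 0 < x -> 0 < R ->
  2 * x < 2 ^ R.-1 ->
  exists (C F' : {set E}), [/\ C \subset F, is_cycle src dst C, F' \subset F :\: C, pruned F' &
    x + #|VF F'| <= #|F'| + 2 * R].
Proof.
move=> pF hx x0 R0 hR.
have hB := bs_bound pF.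
have Fn : F != set0 by rewrite -card_gt0; move: hx x0; plia.
case: (moore pF Fn R0 (_ : #|Bs F| < 2 ^ R.-1)) => [|W [WF Wn eW hW]]; first by move: hB hx hR; plia.
have nd : forall v, degF W v != 1 by move=> v; apply/eqP=> h; have := eW v; rewrite h.
case: (extract Wn nd) => C [P [CW cyc dC]].
have CF := subset_trans CW WF.
set F1 := F :\: C.
case: (core F1) => F' [s' p' h'].
exists C, F'; split => //.
have cF1 : #|F1| + #|C| = #|F|.
  by rewrite /F1 cardsD (setIidPr CF) subnK // subset_leq_card.
have cVC := VF_card_cycle dC.
have hBC : #|Bs F :&: VF C| <= 2 * R.
  apply: leq_trans hW; apply/subset_leq_card/setIS/VF_sub/CW.
have sub : VF F1 \subset VF F :\: (VF C :\: Bs F).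
  apply/subsetP=> v; rewrite !inE => h1; apply/andP; split; last first.
    by apply: leq_trans h1 (degF_sub v (subsetDl _ _)).
  apply/negP=> /andP[vB vC].
  have := degF_split v CF; rewrite -/F1.
  move: vB vC h1; rewrite ?inE dC; case: (P v) => //= vB _ h1.
  by move: vB h1; rewrite -leqNgt; plia.
have sub2 : VF C :\: Bs F \subset VF F by apply: subset_trans (subsetDl _ _) (VF_sub CF).
have := subset_leq_card sub.
rewrite cardsD (setIidPr sub2) cardsD.
have : #|VF C :&: Bs F| <= #|VF C| by apply/subset_leq_card/subsetIl.
have : #|VF C| <= #|VF F| by rewrite (subset_leq_card (VF_sub CF)).
rewrite setIC in hBC.
move: hx cF1 cVC hBC h'; plia.
Qed.


Lemma main R j : 0 < R -> forall F, pruned F ->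
  1 + j * (2 * R) + #|VF F| <= #|F| -> 2 * (1 + j * (2 * R)) < 2 ^ R.-1 ->
  exists cs : seq {set E}, [/\ size cs = j.+1,
    (forall D, D \in cs -> is_cycle src dst D /\ D \subset F) &
    pairwise (fun A B : {set E} => [disjoint A & B]) cs].
Proof.
move=> R0; elim: j => [|j IH] F pF hF hR.
  case: (trim pF hF) => F0 [s0 p0 h0].
  case: (step p0 h0 isT R0 hR) => C [F' [CF cyc _ _ _]].
  exists [:: C]; split => //.
  by move=> D; rewrite inE => /eqP->; split => //; apply: subset_trans CF s0.
case: (trim pF hF) => F0 [s0 p0 h0].
case: (step p0 h0 isT R0 hR) => C [F' [CF cyc sF' pF' hF']].
case: (IH F' pF') => [||cs [sz hcs pcs]].
- by move: hF'; rewrite mulSn; plia.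
- by move: hR; rewrite mulSn; plia.
exists (C :: cs); split => //=.
- by rewrite sz.
- move=> D; rewrite in_cons => /orP[/eqP->|Dcs].
    by split => //; apply: subset_trans CF s0.
  case: (hcs D Dcs) => cD sD; split => //.
  apply: subset_trans sD (subset_trans sF' (subset_trans (subsetDl _ _) s0)).
rewrite pcs andbT; apply/allP=> D Dcs.
case: (hcs D Dcs) => _ sD.
rewrite disjoint_sym disjoints_subset.
apply: subset_trans sD (subset_trans sF' _).
by apply/subsetP=> e; rewrite !inE => /andP[].
Qed.

End G.

Ltac plia2 := repeat match goal with H : _ |- _ => clear H end; lia.

Lemma numeric k p q nE nV : 0 < k -> 2 ^ p <= k -> k < 2 ^ p.+1 ->
  (1 < p -> 2 ^ q <= p /\ p < 2 ^ q.+1) -> 42 * k * p <= nE -> 3 * nV <= 2 * nE ->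
  0 < nV ->
  let R := if p <= 1 then 7 else p + q + 8 in
  1 + k.-1 * (2 * R) + nV <= nE /\ 2 * (1 + k.-1 * (2 * R)) < 2 ^ R.-1.
Proof.
move=> k0 hk1 hk2 hq hE hV V0 R.
case: (leqP p 1) => hp.
  rewrite /R hp.
  have k4 : k < 4.
    by apply: leq_trans hk2 _; case: p hp {hk1 hE hq R} => [|[|]].
  split; last by rewrite (_ : 2 ^ 7.-1 = 64) //; move: k4 k0; plia2.
  case: p hp {hk1 hq R} hk2 hE => [|[|]] // _ hk2 hE.
    by move: hk2 k0 hV V0; rewrite expn1; plia2.
  by move: hE hV k0; rewrite muln1; plia2.
rewrite /R (leqNgt p 1) hp /=.
case: (hq hp) => hq1 hq2.
have qp : q < p.
  by rewrite -(ltn_exp2l _ _ (isT : 1 < 2)); apply: leq_ltn_trans hq1 (ltn_expl _ (isT : 1 < 2)).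
have eR : 2 ^ (p + q + 8).-1 = 2 ^ p.+1 * 2 ^ q.+1 * 32.
  by rewrite (_ : 32 = 2 ^ 5) // -!expnD; congr (2 ^ _); plia2.
rewrite eR.
have hm : k.+1 * p.+1 <= 2 ^ p.+1 * 2 ^ q.+1 by apply: leq_mul.
split.
  move: hE hV qp k0 hp; nia.
move: hm qp k0 hp; nia.
Qed.

Lemma le3 (V : finType) (f : V -> nat) : (forall v, 3 <= f v) -> 3 * #|V| <= \sum_v f v.
Proof.
move=> h; have -> : 3 * #|V| = \sum_(v : V) 3 by rewrite sum_nat_const mulnC.
exact: leq_sum (fun v _ => h v).
Qed.

From Stdlib Require Import Reals Lra.

Lemma INR_exp2 p : INR (expn 2 p) = (2 ^ p)%R.
Proof.
elim: p => [|p IH]; first by [].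
rewrite expnS mulnE mult_INR IH; simpl; lra.
Qed.

Lemma real_bound nE k : (0 < k)%N -> (INR nE >= 42 * INR k * log2 (INR k))%R ->
  (42 * k * trunc_log 2 k <= nE)%N.
Proof.
move=> k0 h; set p := trunc_log 2 k.
have hp : (expn 2 p <= k)%N := trunc_logP (isT : (1 < 2)%N) k0.
have l2 : (0 < ln 2)%R by rewrite -ln_1; apply: ln_increasing; lra.
have hk : (2 ^ p <= INR k)%R by rewrite -INR_exp2; apply: le_INR; apply/leP.
have hln : (INR p * ln 2 <= ln (INR k))%R.
  rewrite -ln_pow; last lra.
  case: (Rle_lt_or_eq_dec _ _ hk) => [lt|->]; last lra.
  apply: Rlt_le; apply: ln_increasing => //; apply: pow_lt; lra.
have hlog : (INR p <= log2 (INR k))%R.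
  rewrite /log2; apply: (Rmult_le_reg_r (ln 2)) => //.
  rewrite /Rdiv Rmult_assoc Rinv_l; lra.
have : (INR (42 * k * p) <= INR nE)%R.
  rewrite !mulnE !mult_INR.
  have -> : INR 42 = 42%R by rewrite INR_IZR_INZ.
  apply: Rle_trans (_ : 42 * INR k * log2 (INR k) <= _)%R; last lra.
  apply: Rmult_le_compat_l => //; have := pos_INR k; lra.
by move/INR_le/leP.
Qed.

Unset Implicit Arguments.
Set Strict Implicit.

Theorem lemma8 (V E : finType) (src dst : E -> V) (k : nat) :
  0 < k ->
  (forall e : E, src e != dst e) ->
  0 < #|V| ->
  (forall v : V, 3 <= deg src dst v) ->
  (INR #|E| >= 42 * INR k * log2 (INR k))%R ->
  exists Cs : 'I_k -> {set E},
    (forall i, is_cycle src dst (Cs i)) /\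
    (forall i j, i != j -> [disjoint Cs i & Cs j]).
Proof.
move=> k0 hl V0 d3 hE.
have degT : forall v, degF src dst [set: E] v = deg src dst v.
  by move=> v; rewrite /degF /deg; apply: eq_card => e; rewrite !inE.
have hpr : pruned src dst [set: E].
  by move=> v; rewrite degT; have := d3 v; case: (deg src dst v) => [|[|]].
have VT : VF src dst [set: E] = [set: V].
  by apply/setP=> v; rewrite !inE degT; apply: leq_trans (d3 v).
have hs := handshake hl [set: E]; rewrite cardsT in hs.
have h3V : 3 * #|V| <= 2 * #|E| by rewrite -hs; apply: le3 => v; rewrite degT.
have hE' := @real_bound #|E| k k0 hE.
have hk1 := trunc_logP (isT : 1 < 2) k0.
have hk2 := trunc_log_ltn k (isT : 1 < 2).
have hq : 1 < trunc_log 2 k ->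
   expn 2 (trunc_log 2 (trunc_log 2 k)) <= trunc_log 2 k /\
   trunc_log 2 k < expn 2 (trunc_log 2 (trunc_log 2 k)).+1.
  move=> h1; split; first by apply: trunc_logP => //; exact: ltnW h1.
  exact: trunc_log_ltn.
case: (@numeric k (trunc_log 2 k) (trunc_log 2 (trunc_log 2 k)) #|E| #|V| k0 hk1 hk2 hq hE' h3V V0) => h1 h2.
set R := (if _ then _ else _) in h1 h2.
have R0 : 0 < R by rewrite /R; case: ifP => _; plia2.
rewrite -(cardsT V) -VT -(cardsT E) in h1.
case: (main hl R0 hpr h1 h2) => cs [sz hcs pcs].
rewrite prednK // in sz.
exists (fun i => nth set0 cs i); split.
  move=> i; have : nth set0 cs i \in cs by apply: mem_nth; rewrite sz.
  by case/hcs.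
have P := pairwiseP set0 pcs.
move=> i j; rewrite neq_ltn => /orP[] ij.
  by apply: P => //; rewrite inE sz.
by rewrite disjoint_sym; apply: P => //; rewrite inE sz.
Qed.
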